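(* Let $\mathcal L\subseteq\mathcal A^*$ be a language. (1) For all $n_2\ge n_1$, $\mathfrak s\in\{\ell,r\}$ and $w'\in\mathcal L^{\mathfrak s}_{n_2}$, the word $w=w'_{[1,n_1]}$ (if $\mathfrak s=\ell$), resp. $w=w'_{[n_2-n_1+1,n_2]}$ (if $\mathfrak s=r$), is $\mathfrak s$-special. Assume now in addition that $\mathcal L$ satisfies RBC with constant $n_0$ (every bispecial word of length $\ge n_0$ is regular bispecial). (2) For all $n_2\ge n_1\ge n_0$, $\mathfrak s\in\{\ell,r\}$ and $w\in\mathcal L^{\mathfrak s}_{n_1}$, there is a unique $w'\in\mathcal L^{\mathfrak s}_{n_2}$ with $w=w'_{[1,n_1]}$ if $\mathfrak s=\ell$, resp. $w=w'_{[n_2-n_1+1,n_2]}$ if $\mathfrak s=r$. (3) There is $N$ such that for all $n_2\ge n_1\ge N$ and $\mathfrak s\in\{\ell,r\}$, any $w'\in\mathcal L^{\mathfrak s}_{n_1}$ and $w''\in\mathcal L^{\mathfrak s}_{n_2}$ with $w'_{[1,n_0]}=w''_{[1,n_0]}$ (if $\mathfrak s=\ell$), resp. $w'_{[n_1-n_0+1,n_1]}=w''_{[n_2-n_0+1,n_2]}$ (if $\mathfrak s=r$), satisfy $Ex^{\mathfrak s}(w')=Ex^{\mathfrak s}(w'')$.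
   Context: $\mathcal{A}$ is a finite alphabet, $\mathcal{A}^*$ the set of nonempty finite words, $w_{[i,j]}=w_i\cdots w_j$. A language is a set $\mathcal L\subseteq\mathcal A^*$ with $\mathcal A\subseteq\mathcal L$, closed under taking subwords, and such that for every $w\in\mathcal L$ there are $a,b\in\mathcal A$ with $awb\in\mathcal L$. $\mathcal L_n$ = words of length $n$ in $\mathcal L$. $Ex^\ell(w)=\{a: aw\in\mathcal L\}$, $Ex^r(w)=\{b: wb\in\mathcal L\}$; $w$ is $\ell$-special (left special) if $|Ex^\ell(w)|\ge2$, $r$-special (right special) if $|Ex^r(w)|\ge2$, bispecial if both; $\mathcal L_n^{\mathfrak s}$ is the set of $\mathfrak s$-special words of length $n$. A bispecial $w$ is regular bispecial if there is exactly one $\hat a\in Ex^\ell(w)$ with $\hat aw$ right special and exactly one $\hat b\in Ex^r(w)$ with $w\hat b$ left special. $\mathcal L$ satisfies RBC (regular bispecial condition) if for some $n_0$ every bispecial word of length $\ge n_0$ is regular bispecial. *)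

(* Defs.v *)
From mathcomp Require Import all_boot.
Set Implicit Arguments. Unset Strict Implicit. Unset Printing Implicit Defensive.

(* Words over a finite alphabet A are sequences [seq A]; A^* = nonempty ones.
   A language is a predicate L on words. *)
Definition language (A : finType) (L : pred (seq A)) : Prop :=
  [/\ (forall w, L w -> w != [::]),
      (forall a : A, L [:: a]),
      (forall u w, L w -> u != [::] -> infix u w -> L u)
    & (forall w, L w -> exists a b, L (a :: rcons w b))].

Inductive side := SL | SR.

Definition Ex (A : finType) (L : pred (seq A)) (s : side) (w : seq A) : {set A} :=
  match s with
  | SL => [set a | L (a :: w)]
  | SR => [set b | L (rcons w b)]
  end.

Definition special (A : finType) (L : pred (seq A)) (s : side) (w : seq A) : bool :=
  L w && (1 < #|Ex L s w|).

Definition bispecial (A : finType) (L : pred (seq A)) (w : seq A) : bool :=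
  special L SL w && special L SR w.

Definition Lsp (A : finType) (L : pred (seq A)) (s : side) (n : nat) (w : seq A) : bool :=
  (size w == n) && special L s w.

Definition regular_bispecial (A : finType) (L : pred (seq A)) (w : seq A) : bool :=
  [&& bispecial L w,
      #|[set a in Ex L SL w | special L SR (a :: w)]| == 1
    & #|[set b in Ex L SR w | special L SL (rcons w b)]| == 1].

Definition RBC (A : finType) (L : pred (seq A)) (n0 : nat) : Prop :=
  forall w, n0 <= size w -> bispecial L w -> regular_bispecial L w.

Definition restr (A : Type) (s : side) (n : nat) (w : seq A) : seq A :=
  match s with
  | SL => take n w
  | SR => drop (size w - n) w
  end.

(* Main.v *)
Require Import Defs.
From mathcomp Require Import all_boot zify.
From Stdlib Require Import Classical.
Set Implicit Arguments. Unset Strict Implicit. Unset Printing Implicit Defensive.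

Definition opp (s : side) := match s with SL => SR | SR => SL end.
Definition ext (A : Type) (s : side) (w : seq A) (a : A) :=
  match s with SL => a :: w | SR => rcons w a end.

Section Base.
Variable A : finType.
Implicit Types (w u v : seq A) (s : side).

Lemma ExE (L : pred (seq A)) s w : Ex L s w = [set a | L (ext s w a)].
Proof. by case: s. Qed.

Lemma size_ext s w a : size (ext s w a) = (size w).+1.
Proof. by case: s => /=; rewrite ?size_rcons. Qed.

Lemma ext_comm s w a b : ext s (ext (opp s) w b) a = ext (opp s) (ext s w a) b.
Proof. by case: s. Qed.

Lemma ext_nil s w a : ext s w a != [::].
Proof. by case: s => //=; case: w. Qed.

Lemma infix_ext s w a : infix w (ext s w a).
Proof. case: s => /=; [exact: infix_cons | exact: infix_rcons]. Qed.

Lemma restr_size s n w : size w = n -> restr s n w = w.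
Proof. by case: s => /= <-; rewrite ?take_size ?subnn ?drop0. Qed.

Lemma size_restr s n w : n <= size w -> size (restr s n w) = n.
Proof. case: s => /= H; rewrite ?size_takel ?size_drop //; lia. Qed.

Lemma restr_restr s n m w : n <= m -> m <= size w ->
  restr s n (restr s m w) = restr s n w.
Proof.
case: s => /= H1 H2; first by rewrite take_takel.
by rewrite size_drop drop_drop; congr drop; lia.
Qed.

Lemma restr_ext s n w c : n <= size w -> restr s n (ext (opp s) w c) = restr s n w.
Proof.
case: s => /= H; first by rewrite -cats1 takel_cat.
by rewrite subSn.
Qed.

Lemma restr_decomp s n u : size u = n.+1 -> exists c, u = ext (opp s) (restr s n u) c.
Proof.
case: s => /=.
  case/lastP: u => [//|u x]; rewrite size_rcons => -[Hs]; subst n; exists x.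
  by rewrite -cats1 takel_cat // take_size cats1.
case: u => [//|x u] /= [Hs]; subst n; exists x; by rewrite subSn // subnn /= drop0.
Qed.

Lemma infix_restr s n w : infix (restr s n w) w.
Proof. case: s => /=; [exact: infix_take | exact/suffixW/suffix_drop]. Qed.

Lemma infix_ext_restr s n w a : infix (ext s (restr s n w) a) (ext s w a).
Proof.
case: s.
  by apply: prefixW; rewrite /ext /restr prefix_cons eqxx /= prefix_take.
by apply: suffixW; rewrite /ext /restr suffix_rcons eqxx /= suffix_drop.
Qed.
End Base.

Section Lang.
Variable A : finType.
Variable L : pred (seq A).
Hypothesis hL : language L.
Implicit Types (w u v : seq A) (s : side).

Lemma L_infix u w : L w -> u != [::] -> infix u w -> L u.
Proof. by case: hL => _ _ H _; apply: H. Qed.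

Lemma L_both a v b : L (a :: rcons v b) -> L (a :: v) /\ L (rcons v b).
Proof.
move=> H; split; apply: (L_infix H) => //.
- by rewrite -rcons_cons; exact: infix_rcons.
- by case: v {H}.
- exact: infix_cons.
Qed.

Lemma ext_exists s w : L w -> exists c, L (ext s w c).
Proof.
case: hL => _ _ _ H /H [a [b /L_both [H1 H2]]].
by case: s; [exists a | exists b].
Qed.

Lemma extend_opp s w a : L (ext s w a) -> exists c, L (ext (opp s) (ext s w a) c).
Proof.
case: hL => _ _ _ H /H [a1 [b1 /L_both [H1 H2]]].
case: s H1 H2 => /= H1 H2; [exists b1 | exists a1]; by [].
Qed.

Lemma Ex_restr_sub s n w : 0 < n -> n <= size w -> Ex L s w \subset Ex L s (restr s n w).
Proof.
move=> H1 H2; apply/subsetP => a; rewrite !ExE !inE => Ha.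
apply: (L_infix Ha); [exact: ext_nil | exact: infix_ext_restr].
Qed.

Lemma special_restr s n w : 0 < n -> n <= size w -> special L s w -> special L s (restr s n w).
Proof.
move=> H1 H2 /andP [Lw Hc]; apply/andP; split.
  apply: (L_infix Lw); last exact: infix_restr.
  by rewrite -size_eq0 size_restr //; lia.
apply: leq_trans Hc _; exact: subset_leq_card (Ex_restr_sub _ H1 H2).
Qed.

Lemma step n0 s w : RBC L n0 -> n0 <= size w -> special L s w ->
  exists b, forall b', special L s (ext (opp s) w b') = (b' == b).
Proof.
move=> HR Hn Hs; have Lw : L w by case/andP: Hs.
case Ho: (special L (opp s) w).
  have Hb : bispecial L w by case: s Hs Ho => /=; rewrite /bispecial => -> ->.
  have := HR w Hn Hb; case/and3P => _ H1 H2.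
  have Hc : #|[set b in Ex L (opp s) w | special L s (ext (opp s) w b)]| == 1.
    by case: s {Hs Ho Hb} H1 H2.
  case/cards1P: Hc => b Hb'; exists b => b'.
  rewrite -in_set1 -Hb' !inE ExE inE.
  case: (boolP (special L s (ext (opp s) w b'))) => [/andP[-> _]|] //.
  by rewrite andbF.
move: Ho; rewrite /special Lw /= => /negbT; rewrite -leqNgt => hcard.
have [c Hc] := ext_exists (opp s) Lw.
have HE : Ex L (opp s) w = [set c].
  apply/eqP; rewrite eq_sym eqEcard sub1set cards1 hcard andbT ExE inE; exact: Hc.
exists c => b'; case: (eqVneq b' c) => [->|ne].
  rewrite Hc /=; case/andP: Hs => _ Hs; apply: leq_trans Hs _.
  apply: subset_leq_card; apply/subsetP => a; rewrite !ExE !inE => Ha.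
  have [d Hd] := extend_opp Ha; rewrite -ext_comm in Hd.
  have Hd' : L (ext (opp s) w d).
    apply: (L_infix Hd); [exact: ext_nil | exact: infix_ext].
  have : d \in Ex L (opp s) w by rewrite ExE inE.
  by rewrite HE in_set1 => /eqP <-.
apply/negbTE/negP => /andP[Hl _].
have : b' \in Ex L (opp s) w by rewrite ExE inE.
by rewrite HE in_set1 (negbTE ne).
Qed.

Variable n0 : nat.
Hypothesis Hn0 : 0 < n0.
Hypothesis HR : RBC L n0.

Lemma ext_unique s k : forall n1 w, n0 <= n1 -> Lsp L s n1 w ->
  exists! w', Lsp L s (n1 + k) w' /\ restr s n1 w' = w.
Proof.
elim: k => [|k IH] n1 w H1 Hw.
  have Hsz : size w = n1 by case/andP: Hw => /eqP.
  exists w; split; first by rewrite addn0 restr_size.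
  by move=> w' [Hw' <-]; rewrite restr_size //; case/andP: Hw'; rewrite addn0 => /eqP.
have [v [[Hv Hrv] Hu]] := IH n1 w H1 Hw.
case/andP: Hv => /eqP Hsv Hspv.
have Hn : n0 <= size v by rewrite Hsv; lia.
have [b Hb] := step HR Hn Hspv.
exists (ext (opp s) v b); split.
  split; first by rewrite /Lsp size_ext Hsv addnS eqxx Hb eqxx.
  by rewrite restr_ext ?Hsv ?leq_addr.
move=> u [Hu1 Hu2]; case/andP: Hu1 => /eqP Hsu Hspu.
have Hv' : v = restr s (n1 + k) u.
  apply: Hu; split.
    rewrite /Lsp size_restr ?Hsu; last lia.
    apply/andP; split => //; apply: special_restr => //; [lia | by rewrite Hsu; lia].
  rewrite restr_restr ?Hsu //; lia.
have Hsu' : size u = (n1 + k).+1 by rewrite Hsu addnS.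
have [c Hc] := restr_decomp s Hsu'.
rewrite -Hv' in Hc; rewrite Hc in Hspu *.
by move: Hspu; rewrite Hb => /eqP ->.
Qed.

Lemma chain_restr s n m w w2 : n0 <= n -> n <= m -> Lsp L s m w2 -> Lsp L s n w ->
  restr s n0 w2 = restr s n0 w -> restr s n w2 = w.
Proof.
move=> H1 H2 Hw2 Hw Heq.
have Hsw : size w = n by case/andP: Hw => /eqP.
have Hsw2 : size w2 = m by case/andP: Hw2 => /eqP.
have Hu : Lsp L s n0 (restr s n0 w).
  rewrite /Lsp size_restr ?Hsw // eqxx /=; apply: special_restr => //; first by rewrite Hsw.
  by case/andP: Hw.
have [x [_ Hx]] := ext_unique (n - n0) (leqnn n0) Hu.
rewrite subnKC // in Hx.
rewrite -(Hx w) ?(Hx (restr s n w2)) //.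
  split; last by rewrite restr_restr ?Hsw2.
  rewrite /Lsp size_restr ?Hsw2 // eqxx /=; apply: special_restr => //; try lia.
  by case/andP: Hw2.
Qed.

Definition Pst s u N := forall n1 n2 w' w'', N <= n1 -> N <= n2 ->
  Lsp L s n1 w' -> Lsp L s n2 w'' -> restr s n0 w' = u -> restr s n0 w'' = u ->
  Ex L s w' = Ex L s w''.

Lemma Pst_mono s u N N' : N <= N' -> Pst s u N -> Pst s u N'.
Proof. move=> HN H n1 n2 w' w'' H1 H2; apply: H; exact: leq_trans HN _. Qed.

Lemma Ex_chain_sub s n m w w2 : n0 <= n -> n <= m -> Lsp L s m w2 -> Lsp L s n w ->
  restr s n0 w2 = restr s n0 w -> Ex L s w2 \subset Ex L s w.
Proof.
move=> H1 H2 Hw2 Hw Heq.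
have <- := chain_restr H1 H2 Hw2 Hw Heq.
have Hsw2 : size w2 = m by case/andP: Hw2 => /eqP.
apply: Ex_restr_sub; [lia | by rewrite Hsw2].
Qed.

Lemma stab_c s u c : forall n w, n0 <= n -> Lsp L s n w -> restr s n0 w = u ->
  #|Ex L s w| <= c -> exists N, n0 <= N /\ Pst s u N.
Proof.
elim: c => [|c IH] n w H1 Hw Hu Hc.
  by case/andP: Hw => _ /andP [_ Hc']; move: Hc; rewrite leqNgt (ltn_trans _ Hc').
case: (classic (exists m w2, [/\ n <= m, Lsp L s m w2, restr s n0 w2 = u &
                               #|Ex L s w2| != #|Ex L s w|])).
  move=> [m [w2 [H2 H3 H4 H5]]].
  apply: (IH m w2) => //; first exact: leq_trans H1 H2.
  have Hsub : Ex L s w2 \subset Ex L s w by apply: (Ex_chain_sub H1 H2 H3 Hw); rewrite H4.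
  have := subset_leq_card Hsub; rewrite leq_eqVlt (negbTE H5) /= => Hlt.
  exact: leq_trans Hlt Hc.
move=> Hno.
have HE : forall m w2, n <= m -> Lsp L s m w2 -> restr s n0 w2 = u -> Ex L s w2 = Ex L s w.
  move=> m w2 H2 H3 H4.
  have Hsub : Ex L s w2 \subset Ex L s w by apply: (Ex_chain_sub H1 H2 H3 Hw); rewrite H4.
  apply/eqP; rewrite eqEcard Hsub /=.
  case: (eqVneq #|Ex L s w2| #|Ex L s w|) => [-> //|ne].
  by exfalso; apply: Hno; exists m, w2.
exists n; split => // n1 n2 w' w'' N1 N2 Hw' Hw'' Hu' Hu''.
by rewrite (HE n1 w') // (HE n2 w'').
Qed.

Lemma stab_u s u : exists N, n0 <= N /\ Pst s u N.
Proof.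
case: (classic (exists n w, [/\ n0 <= n, Lsp L s n w & restr s n0 w = u])).
  by move=> [n [w [H1 H2 H3]]]; apply: (@stab_c s u #|Ex L s w| n w H1 H2 H3).
move=> Hno; exists n0; split => // n1 n2 w' w'' N1 N2 Hw' _ Hu' _.
by exfalso; apply: Hno; exists n1, w'.
Qed.

Lemma stab_list s (l : seq (seq A)) : exists N, n0 <= N /\ forall u, u \in l -> Pst s u N.
Proof.
elim: l => [|u l [N [HN IH]]]; first by exists n0.
have [N' [HN' Hu]] := stab_u s u.
exists (maxn N N'); split; first by rewrite leq_max HN.
move=> x; rewrite in_cons => /orP [/eqP ->|Hx].
  by apply: Pst_mono Hu; rewrite leq_maxr.
by apply: Pst_mono (IH x Hx); rewrite leq_maxl.
Qed.

Lemma stab_side s : exists N, forall n1 n2 w' w'', N <= n1 -> n1 <= n2 ->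
  Lsp L s n1 w' -> Lsp L s n2 w'' -> restr s n0 w' = restr s n0 w'' -> Ex L s w' = Ex L s w''.
Proof.
have [N [HN H]] := stab_list s [seq val t | t <- enum {: n0.-tuple A}].
exists N => n1 n2 w' w'' H1 H2 Hw' Hw'' Heq.
have Hsz : size (restr s n0 w') = n0.
  apply: size_restr; case/andP: Hw' => /eqP -> _; lia.
have Hin : restr s n0 w' \in [seq val t | t <- enum {: n0.-tuple A}].
  have Ht : size (restr s n0 w') == n0 by rewrite Hsz.
  by rewrite -[restr s n0 w']/(val (Tuple Ht)); apply: map_f; rewrite mem_enum.
apply: (H _ Hin n1 n2) => //; exact: leq_trans H1 H2.
Qed.
End Lang.

Theorem mainTheorem2 (A : finType) (L : pred (seq A)) (hL : language L) :
  (* (1) *)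
  (forall (n1 n2 : nat) (s : side) (w' : seq A),
      0 < n1 -> n1 <= n2 -> Lsp L s n2 w' -> special L s (restr s n1 w'))
  /\
  (forall n0 : nat, 0 < n0 -> RBC L n0 ->
     (* (2) *)
     (forall (n1 n2 : nat) (s : side) (w : seq A),
        n0 <= n1 -> n1 <= n2 -> Lsp L s n1 w ->
        exists! w' : seq A, Lsp L s n2 w' /\ restr s n1 w' = w)
     /\
     (* (3) *)
     (exists N : nat, forall (n1 n2 : nat) (s : side) (w' w'' : seq A),
        N <= n1 -> n1 <= n2 -> Lsp L s n1 w' -> Lsp L s n2 w'' ->
        restr s n0 w' = restr s n0 w'' -> Ex L s w' = Ex L s w'')).
Proof.
split.
  move=> n1 n2 s w' H1 H2 /andP [/eqP Hs Hsp].
  apply: special_restr => //; rewrite Hs //.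
move=> n0 Hn0 HR; split.
  move=> n1 n2 s w H1 H2 Hw.
  have := ext_unique hL Hn0 HR (n2 - n1) H1 Hw; by rewrite subnKC.
have [N1 P1] := stab_side hL Hn0 HR SL.
have [N2 P2] := stab_side hL Hn0 HR SR.
exists (maxn N1 N2) => n1 n2 s w' w'' H1.
case: s; [apply: P1 | apply: P2]; apply: leq_trans H1; by rewrite ?leq_maxl ?leq_maxr.
Qed.
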